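(* Let $\Sigma$ be a finite alphabet. For every formula $\phi\in\mathbf{LTL}(\mathbf{F},\wedge)$ over $\Sigma$, either $\phi$ is equivalent to false (no nonempty word satisfies it), or there exist a finite set of non-repeating words $w_1,\dots,w_p\in\Sigma^*$ and $c\in\Sigma\cup\{\varepsilon\}$ such that for every nonempty word $z$: $z\models\phi$ if and only if every $w_q$ ($q\in[1,p]$) is a subword of $z$ and $z$ starts with $c$ (the latter condition being vacuous when $c=\varepsilon$).
   Context: Words are nonempty and indexed from position 1. $\mathbf{LTL}(\mathbf{F},\wedge)$: formulas built from atomic formulas $c\in\Sigma$, conjunction $\wedge$ and the eventually operator $\mathbf{F}$. Semantics on a word $w$ of length $\ell$ at position $i\in[1,\ell]$: $w,i\models c$ iff $w(i)=c$; $\wedge$ as usual; $w,i\models\mathbf{F}\phi$ iff $w,i'\models\phi$ for some $i'\in[i,\ell]$; $w\models\phi$ iff $w,1\models\phi$. A word $u=u(1)\cdots u(\ell')$ is a subword of $v=v(1)\cdots v(\ell)$ if there is a strictly increasing $f:[1,\ell']\to[1,\ell]$ with $v(f(i))=u(i)$ for all $i$ (scattered subsequence). A word is non-repeating if any two consecutive letters are different. *)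

(* Defs.v *)
From mathcomp Require Import all_boot.
Set Implicit Arguments. Unset Strict Implicit. Unset Printing Implicit Defensive.

Inductive ltlF (Sigma : Type) : Type :=
  | Atom : Sigma -> ltlF Sigma
  | And : ltlF Sigma -> ltlF Sigma -> ltlF Sigma
  | Fev : ltlF Sigma -> ltlF Sigma.

(* Semantics at position i. The paper uses positions 1..l; here positions
   are 0-based: paper position i corresponds to index i-1, i.e.
   w(i) = nth _ w (i-1). Only i < size w is meaningful. *)
Fixpoint sat (Sigma : eqType) (w : seq Sigma) (i : nat) (phi : ltlF Sigma) : Prop :=
  match phi with
  | Atom c => i < size w /\ nth c w i = c
  | And p q => sat w i p /\ sat w i q
  | Fev p => exists i', i <= i' /\ i' < size w /\ sat w i' p
  end.

Definition models (Sigma : eqType) (w : seq Sigma) (phi : ltlF Sigma) : Prop :=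
  sat w 0 phi.

Definition non_repeating (Sigma : eqType) (w : seq Sigma) : Prop :=
  forall i, i.+1 < size w -> forall x0 : Sigma, nth x0 w i <> nth x0 w i.+1.

(* z starts with c, c in Sigma ∪ {ε} (None = ε, vacuous). *)
Definition starts_with (Sigma : eqType) (c : option Sigma) (z : seq Sigma) : Prop :=
  match c with
  | None => True
  | Some a => ohead z = Some a
  end.

(* Main.v *)
Require Import Defs.
From mathcomp Require Import all_boot.
From Stdlib Require Import Setoid.
From mathcomp Require Import zify.

Section Aux.
Variable Sigma : eqType.

Lemma sat_lt (w : seq Sigma) i phi : sat w i phi -> i < size w.
Proof.
elim: phi i => [a|p IHp q IHq|p IHp] i /=.
- by case.
- by case=> /IHp.
- by case=> j [hij [hj _]]; apply: leq_ltn_trans hj.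
Qed.

Lemma sub_tr {x y z : seq Sigma} : subseq x y -> subseq y z -> subseq x z.
Proof. move=> h1 h2; exact: (subseq_trans h1 h2). Qed.

Definition charP (ws : seq (seq Sigma)) (c : option Sigma) (s : seq Sigma) :=
  (forall w, w \in ws -> subseq w s) /\ starts_with c s.

Definition fx (a : Sigma) (w : seq Sigma) :=
  if w is b :: u then (if b == a then w else a :: w) else [:: a].

Lemma fx_sub a w : subseq w (fx a w).
Proof. case: w => [|b u] //=; case: eqP => _; [exact: subseq_refl|exact: subseq_cons]. Qed.

Lemma fx_sub2 a w t : subseq w (a :: t) -> subseq (fx a w) (a :: t).
Proof.
case: w => [|b u]; first by rewrite /= eqxx sub0seq.
rewrite /=; case: (eqVneq b a) => [->|nba] /=; first by rewrite eqxx.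
by rewrite eqxx.
Qed.

Lemma fx_nr a w : non_repeating w -> non_repeating (fx a w).
Proof.
case: w => [|b u] /=; first by move=> _ [|i].
case: eqP => [//|nba] h [|i] /= hi x0; first by move=> e; apply: nba.
exact: h.
Qed.

Lemma sub_index (a : Sigma) u s : subseq (a :: u) s -> subseq (a :: u) (drop (index a s) s).
Proof.
elim: s => [|x s IH] //= H. case: (eqVneq x a) H => [->|nxa] H /=; first by rewrite eqxx.
exact: IH.
Qed.

Lemma drop_sub (w : seq Sigma) {i j} : i <= j -> subseq (drop j w) (drop i w).
Proof.
move=> hij. rewrite -(subnK hij) -drop_drop. exact: drop_subseq.
Qed.

Lemma inv (phi : ltlF Sigma) : (forall w i, ~ sat w i phi) \/
  exists ws c, (forall w, w \in ws -> non_repeating w) /\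
    forall w i, i < size w -> (sat w i phi <-> charP ws c (drop i w)).
Proof.
elim: phi => [a|p IHp q IHq|p IHp].
- right; exists [::], (Some a); split=> // w i hi /=.
  rewrite /charP (drop_nth a hi) /=. split.
  + by case=> _ ->.
  + by case=> _ [->].
- case: IHp => [Up|[ws1 [c1 [N1 H1]]]]; first by left=> w i [/Up].
  case: IHq => [Uq|[ws2 [c2 [N2 H2]]]]; first by left=> w i [_ /Uq].
  have Hc : forall w i, i < size w -> sat w i (And p q) <->
     (forall v, v \in ws1 ++ ws2 -> subseq v (drop i w)) /\
     starts_with c1 (drop i w) /\ starts_with c2 (drop i w).
  { move=> w i hi /=; rewrite (H1 w i hi) (H2 w i hi) /charP; split.
    - case=> [[s1 t1] [s2 t2]]; split=> // v; rewrite mem_cat => /orP [] ?.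
      exact: s1. exact: s2.
    - case=> s [t1 t2]; split; split=> // v hv; apply: s; rewrite mem_cat hv ?orbT //. }
  case: c1 Hc H1 => [a|] Hc H1; last first.
    right; exists (ws1 ++ ws2), c2; split.
    + by move=> v; rewrite mem_cat => /orP [] ?; [exact: N1|exact: N2].
    + move=> w i hi; rewrite Hc // /charP; split; [by case=> ? [] |by case]. 
  case: c2 Hc H2 => [b|] Hc H2.
  + case: (eqVneq a b) => [eab|nab].
    * right; exists (ws1 ++ ws2), (Some a); split.
      -- by move=> v; rewrite mem_cat => /orP [] ?; [exact: N1|exact: N2].
      -- move=> w i hi; rewrite Hc // /charP /= -eab; split; [by case=> ? [] |by case].
    * left=> w i hs. have hi := @sat_lt w i _ hs. move: hs; rewrite Hc // /= => [[_ [-> []]]].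
      by move/eqP: nab.
  + right; exists (ws1 ++ ws2), (Some a); split.
    * by move=> v; rewrite mem_cat => /orP [] ?; [exact: N1|exact: N2].
    * move=> w i hi; rewrite Hc // /charP /=; split; [by case=> ? [] |by case].
- case: IHp => [Up|[ws [c [N H]]]]; first by left=> w i [j [_ [_ /Up]]].
  case: c H => [a|] H; last first.
    right; exists ws, None; split=> // w i hi /=; split.
    + case=> j [hij [hj]]; rewrite (H w j hj) /charP => [[s _]]; split=> // v hv.
      exact: sub_tr (s v hv) (drop_sub w hij).
    + move=> hc; exists i; split=> //; split=> //; by rewrite H.
  right; exists ([:: a] :: map (fx a) ws), None; split.
  + move=> v; rewrite inE => /orP [/eqP -> | /mapP [u hu ->]].
    * by move=> [|k].
    * exact/fx_nr/N.
  + move=> w i hi /=; split.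
    * case=> j [hij [hj]]; rewrite (H w j hj) /charP /= => [[s e]].
      have ej : drop j w = a :: drop j.+1 w.
        by move: e; rewrite (drop_nth a hj) /= => [[->]].
      split=> // v; rewrite inE => /orP [/eqP -> | /mapP [u hu ->]];
        apply: sub_tr (drop_sub w hij); rewrite ej.
      - by rewrite sub1seq mem_head.
      - apply: fx_sub2; rewrite -ej; exact: s.
    * case=> s _.
      have ha : a \in drop i w by rewrite -sub1seq; apply: s; rewrite mem_head.
      set k := index a (drop i w).
      have hk : k < size (drop i w) by rewrite index_mem.
      have hj : k + i < size w by move: hk; rewrite size_drop; lia.
      have ek : drop (k + i) w = a :: drop k.+1 (drop i w).
        by rewrite -drop_drop (drop_nth a hk) nth_index.
      exists (k + i); split; first exact: leq_addl.
      split=> //; rewrite H // /charP; split; last by rewrite ek.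
      move=> v hv; apply: sub_tr (fx_sub a v) _; rewrite -drop_drop.
      have hsub : subseq (fx a v) (drop i w).
        by apply: s; rewrite inE; apply/orP; right; apply/mapP; exists v.
      move: hsub; case: (v) => [|b u] /=.
      - exact: sub_index.
      - by case: eqP => [->|_]; apply: sub_index.
Qed.

End Aux.

Theorem lemma2 (Sigma : finType) (phi : ltlF Sigma) :
  (forall z : seq Sigma, z <> [::] -> ~ models z phi) \/
  exists (ws : seq (seq Sigma)) (c : option Sigma),
    (forall w, w \in ws -> non_repeating w) /\
    forall z : seq Sigma, z <> [::] ->
      (models z phi <-> ((forall w, w \in ws -> subseq w z) /\ starts_with c z)).
Proof.
case: (@inv Sigma phi) => [U|[ws [c [N H]]]]; first by left=> z _; apply: U.
right; exists ws, c; split=> // z hz.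
have h0 : 0 < size z by case: z hz.
by rewrite /models (H z 0 h0) drop0.
Qed.
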